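(* On a complex $3$-dimensional torus $T^3$ there is a hermitian metric $\omega$ satisfying \[ \frac{\sqrt{-1}}{2}\,\partial\bar\partial\omega\wedge\omega>0\quad\text{on } T^3 . \]
   Context: A hermitian metric is identified with its positive real $(1,1)$-form $\omega$; a real $(3,3)$-form is $>0$ if it is a positive multiple of $\omega^3$ at every point. *)

(* Defs.v *)
From HB Require Import structures.
From mathcomp Require Import all_boot all_order all_algebra.
From mathcomp Require Import all_classical all_reals all_analysis.
From mathcomp Require Import complex.
Set Implicit Arguments.
Unset Strict Implicit.
Unset Printing Implicit Defensive.
Import Order.TTheory GRing.Theory Num.Theory.
Local Open Scope ring_scope.

(* The complex torus T^3 = C^3 / (Z^3 + i Z^3).  A point of C^3 is encoded by
   its real coordinates p : 'rV[R]_6 = 'rV[R]_(3+3), with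
   z_j = p (lshift 3 j) + i p (rshift 3 j)   (j : 'I_3).
   Functions on T^3 are Z^6-periodic functions on R^6 = C^3. *)

Definition ev (R : realType) (k : 'I_6) : 'rV[R]_6 := delta_mx 0 k.

Fixpoint iter_partial (R : realType) (s : seq 'I_6) (f : 'rV[R]_6 -> R)
  : 'rV[R]_6 -> R :=
  match s with
  | [::] => f
  | k :: s' => fun x => 'D_(ev R k) (iter_partial s' f) x
  end.

Definition smoothR (R : realType) (f : 'rV[R]_6 -> R) : Prop :=
  forall (s : seq 'I_6) x, differentiable (iter_partial s f) x.

Definition cfun (R : realType) := 'rV[R]_6 -> R[i].

Definition smoothC (R : realType) (f : cfun R) : Prop :=
  smoothR (fun x => complex.Re (f x)) /\ smoothR (fun x => complex.Im (f x)).

(* invariance under the lattice Z^3 + i Z^3, i.e. f descends to T^3 *)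
Definition periodic (R : realType) (f : cfun R) : Prop :=
  forall (x : 'rV[R]_6) (k : 'I_6), f (x + ev R k) = f x.

Definition dreal (R : realType) (k : 'I_6) (f : cfun R) : cfun R :=
  fun x => Complex ('D_(ev R k) (fun y => complex.Re (f y)) x)
                   ('D_(ev R k) (fun y => complex.Im (f y)) x).

Definition dz (R : realType) (j : 'I_3) (f : cfun R) : cfun R :=
  fun x => (Complex (1/2) 0) *
           (dreal (lshift 3 j) f x - Complex 0 1 * dreal (rshift 3 j) f x).
Definition dzb (R : realType) (j : 'I_3) (f : cfun R) : cfun R :=
  fun x => (Complex (1/2) 0) *
           (dreal (lshift 3 j) f x + Complex 0 1 * dreal (rshift 3 j) f x).

(* The generators of the exterior algebra are indexed by g : 'I_6 = 'I_(3+3):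
   g = lshift 3 j stands for dz_j and g = rshift 3 j for dzbar_j, ordered
   dz_0 < dz_1 < dz_2 < dzbar_0 < dzbar_1 < dzbar_2.  A form a is given by its
   coefficients: a K is the coefficient of the wedge (in increasing order) of
   the generators in K. *)
Definition form (R : realType) := {set 'I_6} -> cfun R.

(* sign of the shuffle putting e_I /\ e_J in increasing order *)
Definition shuffle_sign (R : realType) (I J : {set 'I_6}) : R[i] :=
  (-1) ^+ #|[set p : 'I_6 * 'I_6 | [&& p.1 \in I, p.2 \in J & (p.2 < p.1)%N]]|.

Definition wedge (R : realType) (a b : form R) : form R :=
  fun K x => \sum_(I : {set 'I_6} | I \subset K)
               shuffle_sign R I (K :\: I) * a I x * b (K :\: I) x.

Definition scale_form (R : realType) (c : R[i]) (a : form R) : form R :=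
  fun K x => c * a K x.

(* partial (del) and delbar operators:
   del a = sum_j d(a_I)/dz_j dz_j /\ e_I,  delbar a = sum_j d(a_I)/dzbar_j dzbar_j /\ e_I *)
Definition del (R : realType) (a : form R) : form R :=
  fun K x => \sum_(g in K) shuffle_sign R [set g] (K :\ g) *
     match @fintype.split 3 3 g with
     | inl j => dz j (a (K :\ g)) x
     | inr _ => 0
     end.
Definition delbar (R : realType) (a : form R) : form R :=
  fun K x => \sum_(g in K) shuffle_sign R [set g] (K :\ g) *
     match @fintype.split 3 3 g with
     | inl _ => 0
     | inr j => dzb j (a (K :\ g)) x
     end.

Definition omega_of (R : realType) (g : 'I_3 -> 'I_3 -> cfun R) : form R :=
  fun K x => \sum_(j < 3) \sum_(k < 3)
     (if K == [set (lshift 3 j : 'I_6); (rshift 3 k : 'I_6)]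
      then Complex 0 1 * g j k x else 0).

Definition hermitian_metric (R : realType) (g : 'I_3 -> 'I_3 -> cfun R) : Prop :=
  (forall j k, smoothC (g j k) /\ periodic (g j k)) /\
  (forall x : 'rV[R]_6,
     (forall j k, g k j x = conjc (g j k x)) /\
     (forall v : 'rV[R[i]]_3, v != 0 ->
        0 < \sum_(j < 3) \sum_(k < 3) v 0 j * g j k x * conjc (v 0 k))).

(* a (3,3)-form eta is > 0 : at every point it is a positive multiple of omega^3 *)
Definition positive_top (R : realType) (eta omega3 : form R) : Prop :=
  forall x : 'rV[R]_6, exists c : R, 0 < c /\
    forall K : {set 'I_6}, eta K x = Complex c 0 * omega3 K x.

(* Main.v *)
Require Import Defs.
From HB Require Import structures.
From mathcomp Require Import all_boot all_order all_algebra.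
From mathcomp Require Import all_classical all_reals all_analysis.
From mathcomp Require Import complex.
From mathcomp Require Import ring lra.

Module Helpers.
Set Implicit Arguments. Unset Strict Implicit. Unset Printing Implicit Defensive.
Import Order.TTheory GRing.Theory Num.Theory.
Import numFieldNormedType.Exports.
Local Open Scope ring_scope.

Definition pr0 {R : realType} (x : 'rV[R]_6) : R := x ord0 ord0.

Lemma diff_pr0 (R : realType) (x : 'rV[R]_6) : 'd (@pr0 R) x = @pr0 R :> (_ -> _).
Proof.
have @f : {linear 'rV[R]_6 -> R}.
  by exists (fun N : 'rV[R]_6 => N ord0 ord0); do 2![eexists]; do ?[constructor];
     rewrite ?mxE// => ? *; rewrite ?mxE//; move=> ?; rewrite !mxE.
rewrite (_ : (@pr0 R) = f) //. apply: diff_lin. exact: coord_continuous.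
Qed.

Lemma Dcomp (R : realType) (h : R -> R) (x v : 'rV[R]_6) :
  differentiable h (pr0 x) ->
  'D_v (fun y => h (pr0 y)) x = pr0 v * derive1 h (pr0 x).
Proof.
move=> dh.
have dp : differentiable (@pr0 R) x := differentiable_coord x ord0 ord0.
rewrite (_ : (fun y => h (pr0 y)) = h \o pr0) //.
rewrite deriveE; last exact: differentiable_comp.
rewrite diff_comp // /= diff_pr0 diff1E //.
Qed.

Set Implicit Arguments. Unset Strict Implicit. Unset Printing Implicit Defensive.
Import Order.TTheory GRing.Theory Num.Theory.
Import numFieldNormedType.Exports.
Local Open Scope ring_scope.

Definition wp (R : realType) : R := pi *+ 2.
Definition Cx {R : realType} (x : 'rV[R]_6) : R := cos (wp R * pr0 x).
Definition Sx {R : realType} (x : 'rV[R]_6) : R := sin (wp R * pr0 x).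
Definition rtrig {R : realType} (p q r : R) : 'rV[R]_6 -> R :=
  fun x => p + q * Cx x + r * Sx x.

Lemma is_derive_lin (R : realType) (w t : R) : is_derive t 1 (fun s => w * s) w.
Proof.
have H := @is_deriveZ R R R id w t 1 1 (is_derive_id _ _).
rewrite (_ : w *: (1 : R) = w) in H; last by rewrite /GRing.scale /= mulr1.
exact: H.
Qed.

Lemma is_derive_cosw (R : realType) (w t : R) :
  is_derive t 1 (fun s => cos (w * s)) (- sin (w * t) * w).
Proof.
have := @is_derive1_comp R cos (fun s => w * s) t _ _ (is_derive_cos _) (is_derive_lin w t).
by [].
Qed.

Lemma is_derive_sinw (R : realType) (w t : R) :
  is_derive t 1 (fun s => sin (w * s)) (cos (w * t) * w).
Proof.
have := @is_derive1_comp R sin (fun s => w * s) t _ _ (is_derive_sin _) (is_derive_lin w t).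
by [].
Qed.

Lemma diff_Cx (R : realType) (x : 'rV[R]_6) : differentiable (@Cx R) x.
Proof.
rewrite (_ : @Cx R = (fun s => cos (wp R * s)) \o pr0) //.
apply: differentiable_comp; first exact: differentiable_coord.
apply/derivable1_diffP. by case: (is_derive_cosw (wp R) (pr0 x)).
Qed.

Lemma diff_Sx (R : realType) (x : 'rV[R]_6) : differentiable (@Sx R) x.
Proof.
rewrite (_ : @Sx R = (fun s => sin (wp R * s)) \o pr0) //.
apply: differentiable_comp; first exact: differentiable_coord.
apply/derivable1_diffP. by case: (is_derive_sinw (wp R) (pr0 x)).
Qed.

Lemma D_Cx (R : realType) (x v : 'rV[R]_6) :
  'D_v (@Cx R) x = pr0 v * (- Sx x * wp R).
Proof.
rewrite (@Dcomp R (fun s => cos (wp R * s))); last first.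
  apply/derivable1_diffP. by case: (is_derive_cosw (wp R) (pr0 x)).
by rewrite derive1E (@derive_val _ _ _ _ _ _ _ (is_derive_cosw (wp R) (pr0 x))).
Qed.

Lemma D_Sx (R : realType) (x v : 'rV[R]_6) :
  'D_v (@Sx R) x = pr0 v * (Cx x * wp R).
Proof.
rewrite (@Dcomp R (fun s => sin (wp R * s))); last first.
  apply/derivable1_diffP. by case: (is_derive_sinw (wp R) (pr0 x)).
by rewrite derive1E (@derive_val _ _ _ _ _ _ _ (is_derive_sinw (wp R) (pr0 x))).
Qed.

Lemma rtrigE (R : realType) (p q r : R) :
  rtrig p q r = cst p + q \*: (@Cx R) + r \*: (@Sx R).
Proof. by apply/funext => x. Qed.

Lemma diff_rtrig (R : realType) (p q r : R) x : differentiable (rtrig p q r) x.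
Proof.
rewrite rtrigE; apply: differentiableD; first apply: differentiableD.
- exact: differentiable_cst.
- apply: differentiableZ; exact: diff_Cx.
- apply: differentiableZ; exact: diff_Sx.
Qed.

Lemma D_rtrig (R : realType) (p q r : R) (x v : 'rV[R]_6) :
  'D_v (rtrig p q r) x = rtrig 0 (pr0 v * wp R * r) (- (pr0 v * wp R * q)) x.
Proof.
have dC := @diff_derivable R _ _ _ _ v (diff_Cx x).
have dS := @diff_derivable R _ _ _ _ v (diff_Sx x).
rewrite rtrigE deriveD; last by apply: derivableZ.
  rewrite deriveD; last by apply: derivableZ.
    rewrite derive_cst !deriveZ // D_Cx D_Sx /rtrig /GRing.scale /=.
    ring.
  exact: derivable_cst.
apply: derivableD; last by apply: derivableZ.
exact: derivable_cst.
Qed.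

Set Implicit Arguments. Unset Strict Implicit. Unset Printing Implicit Defensive.
Import Order.TTheory GRing.Theory Num.Theory.
Import numFieldNormedType.Exports.
Local Open Scope ring_scope.
Local Open Scope complex_scope.

Definition ctrig {R : realType} (a b c : R[i]) : cfun R :=
  fun x => a + b * (Cx x)%:C + c * (Sx x)%:C.

Lemma ctrig_split (R : realType) (a b c : R[i]) x :
  ctrig a b c x = Complex (rtrig (complex.Re a) (complex.Re b) (complex.Re c) x) (rtrig (complex.Im a) (complex.Im b) (complex.Im c) x).
Proof.
case: a => a1 a2; case: b => b1 b2; case: c => c1 c2.
rewrite /ctrig /rtrig /=.
simpc. congr Complex; ring.
Qed.

Lemma pr0_ev (R : realType) (k : 'I_6) : pr0 (ev R k) = ((val k == 0)%N)%:R.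
Proof. by rewrite /pr0 /ev mxE eqxx /= eq_sym. Qed.

Lemma dreal_ctrig (R : realType) (k : 'I_6) (a b c : R[i]) :
  dreal k (ctrig a b c) =
  ctrig 0 ((pr0 (ev R k) * wp R)%:C * c) (- ((pr0 (ev R k) * wp R)%:C * b)).
Proof.
apply/funext => x; rewrite /dreal.
rewrite (_ : (fun y => complex.Re (ctrig a b c y)) = rtrig (complex.Re a) (complex.Re b) (complex.Re c)); last first.
  by apply/funext => y; rewrite ctrig_split.
rewrite (_ : (fun y => complex.Im (ctrig a b c y)) = rtrig (complex.Im a) (complex.Im b) (complex.Im c)); last first.
  by apply/funext => y; rewrite ctrig_split.
rewrite !D_rtrig ctrig_split.
case: a => a1 a2; case: b => b1 b2; case: c => c1 c2.
by congr Complex; rewrite /rtrig /=; ring.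
Qed.

Definition dj {R : realType} (j : 'I_3) : R[i] := (((val j == 0)%N)%:R * (wp R / 2))%:C.

Lemma dz_ctrig (R : realType) (j : 'I_3) (a b c : R[i]) :
  dz j (ctrig a b c) = ctrig 0 (dj j * c) (- (dj j * b)).
Proof.
apply/funext => x; rewrite /dz !dreal_ctrig !pr0_ev /= /dj.
idtac.
rewrite !ctrig_split.
case: a => a1 a2; case: b => b1 b2; case: c => c1 c2.
simpc. by congr Complex; rewrite /rtrig /=; ring.
Qed.

Lemma dzb_ctrig (R : realType) (j : 'I_3) (a b c : R[i]) :
  dzb j (ctrig a b c) = ctrig 0 (dj j * c) (- (dj j * b)).
Proof.
apply/funext => x; rewrite /dzb !dreal_ctrig !pr0_ev /= /dj.
idtac.
rewrite !ctrig_split.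
case: a => a1 a2; case: b => b1 b2; case: c => c1 c2.
simpc. by congr Complex; rewrite /rtrig /=; ring.
Qed.

Set Implicit Arguments. Unset Strict Implicit. Unset Printing Implicit Defensive.
Import Order.TTheory GRing.Theory Num.Theory.
Import numFieldNormedType.Exports.
Local Open Scope ring_scope.

Definition mf {R : realType} {I : finType} (S : I -> {set 'I_6}) (F : I -> cfun R) : Defs.form R :=
  fun K x => \sum_(i : I) (if K == S i then F i x else 0).

Lemma setcond (S T K : {set 'I_6}) :
  (S \subset K) && (K :\: S == T) = [disjoint S & T] && (K == S :|: T).
Proof.
apply/idP/idP.
- case/andP => sSK /eqP <-; apply/andP; split.
    by rewrite disjoint_sym finset.disjoints_subset finset.setDE finset.subsetIr.
  apply/eqP/setP => t; rewrite !inE; case: (boolP (t \in S)) => //= /(fintype.subsetP sSK) -> //.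
- case/andP => dST /eqP ->; rewrite finset.subsetUl /=.
  rewrite finset.setDUl finset.setDv finset.set0U; apply/eqP/finset.setDidPl.
  by rewrite disjoint_sym.
Qed.

Lemma sum_pick (R : realType) (S K : {set 'I_6}) (X : {set 'I_6} -> R[i]) :
  \sum_(L : {set 'I_6} | L \subset K) (if L == S then X L else 0)
  = if S \subset K then X S else 0.
Proof.
rewrite -big_mkcondr.
case: (boolP (S \subset K)) => sSK.
  rewrite (eq_bigl (fun L => L == S)) ?big_pred1_eq //.
  by move=> L /=; case: (L =P S) => [->|_]; rewrite ?sSK ?andbF.
rewrite big_pred0 // => L; case: (L =P S) => [->|_]; by rewrite ?andbF ?andbT ?(negbTE sSK).
Qed.

Lemma wedge_mf (R : realType) (I J : finType) (S : I -> {set 'I_6}) (F : I -> cfun R)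
  (T : J -> {set 'I_6}) (G : J -> cfun R) :
  wedge (mf S F) (mf T G) =
  mf (fun p : I * J => S p.1 :|: T p.2)
     (fun p x => if [disjoint S p.1 & T p.2]
                 then shuffle_sign R (S p.1) (T p.2) * F p.1 x * G p.2 x else 0).
Proof.
apply/funext => K; apply/funext => x; rewrite /wedge /mf.
under eq_bigr => L _ do rewrite -mulrA big_distrlr mulr_sumr.
under eq_bigr => L _ do under eq_bigr => i _ do rewrite mulr_sumr.
rewrite exchange_big /=.
under eq_bigr => i _ do rewrite exchange_big /=.
rewrite pair_bigA /=; apply: eq_bigr => [[i j]] _ /=.
rewrite (eq_bigr (fun L => if L == S i then
     (if K :\: L == T j then shuffle_sign R L (K :\: L) * F i x * G j x else 0) else 0)); last first.
  move=> L _; case: eqP => [->|_]; last by rewrite mul0r mulr0.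
  by case: eqP => _; rewrite ?mulr0 ?mul0r ?mulr1 // !mulrA.
rewrite sum_pick.
have := setcond (S i) (T j) K.
move=> H; case E: ((S i \subset K) && (K :\: S i == T j)).
  case/andP: E => sK /eqP eK; move: H.
  by rewrite sK eK eqxx /= => /esym /andP [-> ->].
move: H; rewrite E => /esym H.
have -> : (if S i \subset K then (if K :\: S i == T j then shuffle_sign R (S i) (K :\: S i) * F i x * G j x else 0) else 0) = 0.
  by move: E; case: (S i \subset K) => //= ->.
by move: H; case: [disjoint S i & T j]; case: (K == _).
Qed.

Local Open Scope complex_scope.

Definition mfc {R : realType} {I : finType} (S : I -> {set 'I_6}) (a b c : I -> R[i]) :=
  mf S (fun i => ctrig (a i) (b i) (c i)).

Lemma mfcE (R : realType) (I : finType) (S : I -> {set 'I_6}) (a b c : I -> R[i]) K :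
  mfc S a b c K = ctrig (\sum_i (if K == S i then a i else 0))
                        (\sum_i (if K == S i then b i else 0))
                        (\sum_i (if K == S i then c i else 0)).
Proof.
apply/funext => x; rewrite /mfc /mf /ctrig !mulr_suml -!big_split /=.
by apply: eq_bigr => i _; case: (_ == _); rewrite ?mul0r ?addr0.
Qed.

Lemma ctrig_scale (R : realType) (s a b c : R[i]) x :
  s * ctrig a b c x = ctrig (s * a) (s * b) (s * c) x.
Proof. by rewrite /ctrig !mulrDr !mulrA. Qed.

Lemma sum_ctrig (R : realType) (I : finType) (P : I -> bool) (a b c : I -> R[i]) x :
  \sum_i (if P i then ctrig (a i) (b i) (c i) x else 0) =
  ctrig (\sum_i (if P i then a i else 0)) (\sum_i (if P i then b i else 0))
        (\sum_i (if P i then c i else 0)) x.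
Proof.
rewrite /ctrig !mulr_suml -!big_split /=.
by apply: eq_bigr => i _; case: (P i); rewrite ?mul0r ?addr0.
Qed.

Lemma coef_eq (R : realType) (I : finType) (r : 'I_6) (K : {set 'I_6})
  (S : I -> {set 'I_6}) (f : I -> R[i]) (s : {set 'I_6} -> R[i]) :
  (if r \in K then s (K :\ r) * \sum_i (if K :\ r == S i then f i else 0) else 0)
  = \sum_i (if K == r |: S i then (if r \in S i then 0 else s (S i) * f i) else 0).
Proof.
have -> : (if r \in K then s (K :\ r) * \sum_i (if K :\ r == S i then f i else 0) else 0)
  = \sum_i (if (r \in K) && (K :\ r == S i) then s (K :\ r) * f i else 0).
  case: (r \in K) => /=; last by rewrite big1.
  by rewrite mulr_sumr; apply: eq_bigr => i _; case: (_ == _); rewrite ?mulr0.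
apply: eq_bigr => i _.
have := setcond [set r] (S i) K.
rewrite finset.sub1set finset.disjoints1 => H.
case E: ((r \in K) && (K :\ r == S i)).
  case/andP: E => rK /eqP eK; move: H.
  by rewrite rK eK eqxx /= => /esym /andP [/negbTE -> ->].
move: H; rewrite E => /esym.
by case: (r \in S i); case: (K == _).
Qed.

Lemma sum_if_mul (R : realType) (I : finType) (P : I -> bool) (f : I -> R[i]) k :
  k * \sum_i (if P i then f i else 0) = \sum_i (if P i then k * f i else 0).
Proof. by rewrite mulr_sumr; apply: eq_bigr => i _; case: (P i); rewrite ?mulr0. Qed.

Lemma sum_if_opp (R : realType) (I : finType) (P : I -> bool) (f : I -> R[i]) :
  - \sum_i (if P i then f i else 0) = \sum_i (if P i then - f i else 0).
Proof. by rewrite -sumrN; apply: eq_bigr => i _; case: (P i); rewrite ?oppr0. Qed.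

Lemma coef_sum (R : realType) (I : finType) (r : 'I_3 -> 'I_6) (K : {set 'I_6})
  (S : I -> {set 'I_6}) (h : 'I_3 -> I -> R[i]) :
  \sum_m (if r m \in K then shuffle_sign R [set r m] (K :\ r m) *
            \sum_i (if K :\ r m == S i then h m i else 0) else 0)
  = \sum_(p : I * 'I_3) (if K == r p.2 |: S p.1 then
       (if r p.2 \in S p.1 then 0 else shuffle_sign R [set r p.2] (S p.1) * h p.2 p.1) else 0).
Proof.
under eq_bigr => m _ do rewrite (coef_eq (r m) K S (h m) (shuffle_sign R [set r m])).
by rewrite exchange_big pair_bigA.
Qed.

Lemma split_l (j : 'I_3) : @fintype.split 3 3 (lshift 3 j) = inl j.
Proof. exact: (unsplitK (inl _ j)). Qed.
Lemma split_r (j : 'I_3) : @fintype.split 3 3 (rshift 3 j) = inr j.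
Proof. exact: (unsplitK (inr _ j)). Qed.

Lemma delbar_mfc (R : realType) (I : finType) (S : I -> {set 'I_6}) (a b c : I -> R[i]) :
  delbar (mfc S a b c) =
  mfc (fun p : I * 'I_3 => rshift 3 p.2 |: S p.1)
      (fun _ => 0)
      (fun p => if rshift 3 p.2 \in S p.1 then 0 else
                shuffle_sign R [set rshift 3 p.2] (S p.1) * (dj p.2 * c p.1))
      (fun p => if rshift 3 p.2 \in S p.1 then 0 else
                shuffle_sign R [set rshift 3 p.2] (S p.1) * (- (dj p.2 * b p.1))).
Proof.
apply/funext => K; apply/funext => x; rewrite /delbar big_mkcond /=.
rewrite (@big_split_ord _ _ _ 3 3) /=.
under eq_bigr => j _ do rewrite split_l.
under [X in _ + X]eq_bigr => j _ do rewrite split_r mfcE dzb_ctrig ctrig_scale.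
rewrite big1; last by move=> j _; case: (_ \in _); rewrite ?mulr0.
rewrite add0r sum_ctrig mfcE; congr ctrig.
- rewrite big1; last by move=> m _; case: ifP; rewrite ?mulr0.
  by rewrite big1 // => p _; case: ifP.
- under eq_bigr => m _ do rewrite sum_if_mul.
  exact: (coef_sum (fun m => rshift 3 m) K S (fun m i => dj m * c i)).
- under eq_bigr => m _ do rewrite sum_if_mul sum_if_opp.
  exact: (coef_sum (fun m => rshift 3 m) K S (fun m i => - (dj m * b i))).
Qed.

Lemma del_mfc (R : realType) (I : finType) (S : I -> {set 'I_6}) (a b c : I -> R[i]) :
  del (mfc S a b c) =
  mfc (fun p : I * 'I_3 => lshift 3 p.2 |: S p.1)
      (fun _ => 0)
      (fun p => if lshift 3 p.2 \in S p.1 then 0 else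
                shuffle_sign R [set lshift 3 p.2] (S p.1) * (dj p.2 * c p.1))
      (fun p => if lshift 3 p.2 \in S p.1 then 0 else
                shuffle_sign R [set lshift 3 p.2] (S p.1) * (- (dj p.2 * b p.1))).
Proof.
apply/funext => K; apply/funext => x; rewrite /del big_mkcond /=.
rewrite (@big_split_ord _ _ _ 3 3) /=.
under [X in _ + X]eq_bigr => j _ do rewrite split_r.
under eq_bigr => j _ do rewrite split_l mfcE dz_ctrig ctrig_scale.
rewrite [X in _ + X]big1; last by move=> j _; case: (_ \in _); rewrite ?mulr0.
rewrite addr0 sum_ctrig mfcE; congr ctrig.
- rewrite big1; last by move=> m _; case: ifP; rewrite ?mulr0.
  by rewrite big1 // => p _; case: ifP.
- under eq_bigr => m _ do rewrite sum_if_mul.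
  exact: (coef_sum (fun m => lshift 3 m) K S (fun m i => dj m * c i)).
- under eq_bigr => m _ do rewrite sum_if_mul sum_if_opp.
  exact: (coef_sum (fun m => lshift 3 m) K S (fun m i => - (dj m * b i))).
Qed.

Set Implicit Arguments. Unset Strict Implicit. Unset Printing Implicit Defensive.
Import Order.TTheory GRing.Theory Num.Theory.
Import numFieldNormedType.Exports.
Local Open Scope ring_scope.
Local Open Scope complex_scope.

Definition ga {R : realType} (j k : 'I_3) : R[i] :=
  match val j, val k with
  | 0, 0 | 1, 1 | 2, 2 => 2
  | _, _ => 0 end.
Definition gb {R : realType} (j k : 'I_3) : R[i] :=
  match val j, val k with
  | 1, 2 | 2, 1 => 1
  | _, _ => 0 end.
Definition gc {R : realType} (j k : 'I_3) : R[i] :=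
  match val j, val k with
  | 1, 2 => 'i
  | 2, 1 => - 'i
  | _, _ => 0 end.
Definition gm {R : realType} (j k : 'I_3) : cfun R := ctrig (ga j k) (gb j k) (gc j k).

Definition sig (p : 'I_3 * 'I_3) : {set 'I_6} := [set lshift 3 p.1; rshift 3 p.2].

Lemma omegaE (R : realType) :
  omega_of (@gm R) = mfc sig (fun p => 'i * ga p.1 p.2) (fun p => 'i * gb p.1 p.2)
                             (fun p => 'i * gc p.1 p.2).
Proof.
apply/funext => K; apply/funext => x.
rewrite /omega_of /mfc /mf pair_bigA /=; apply: eq_bigr => [[j k]] _ /=.
by rewrite /gm ctrig_scale.
Qed.

Lemma mf_top (R : realType) (J : finType) (S : J -> {set 'I_6}) (F : J -> cfun R)
   (Q : pred J) K x :
  (forall p, Q p -> S p = [set: 'I_6]%SET) -> (forall p, ~~ Q p -> F p x = 0) ->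
  mf S F K x = if K == [set: 'I_6]%SET then \sum_(p <- seq.filter Q (enum J)) F p x else 0.
Proof.
move=> HS HF; rewrite /mf.
rewrite (eq_bigr (fun p => if Q p then (if K == [set: 'I_6]%SET then F p x else 0) else 0)); last first.
  move=> p _; case: (boolP (Q p)) => q; first by rewrite HS.
  by rewrite HF //; case: (_ == _).
rewrite -big_mkcond big_filter_cond /=.
case: (K == [set: 'I_6]%SET); last by rewrite big1.
under [RHS]eq_bigl => i do rewrite andbT.
by rewrite big_enum_cond; apply: eq_bigl => i; rewrite inE.
Qed.

Set Implicit Arguments. Unset Strict Implicit. Unset Printing Implicit Defensive.
Import Order.TTheory GRing.Theory Num.Theory.
Import numFieldNormedType.Exports.
Local Open Scope ring_scope.

Definition toset (s : seq nat) : {set 'I_6} := [set t : 'I_6 | val t \in s].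

Lemma mem_toset t s : (t \in toset s) = (val t \in s).
Proof. by rewrite inE. Qed.

Lemma setU1_l (j : 'I_3) s : lshift 3 j |: toset s = toset (val j :: s).
Proof.
by apply/setP => t; rewrite !inE.
Qed.

Lemma setU1_r (j : 'I_3) s : rshift 3 j |: toset s = toset ((3 + val j)%N :: s).
Proof.
by apply/setP => t; rewrite !inE.
Qed.

Lemma set1_l (j : 'I_3) : [set lshift 3 j] = toset [:: val j].
Proof.
by apply/setP => t; rewrite !inE.
Qed.

Lemma set1_r (j : 'I_3) : [set rshift 3 j] = toset [:: (3 + val j)%N].
Proof.
by apply/setP => t; rewrite !inE.
Qed.

Lemma sigE (p : 'I_3 * 'I_3) : sig p = toset [:: val p.1; (3 + val p.2)%N].
Proof. by rewrite /sig set1_r setU1_l. Qed.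

Lemma setU_t s1 s2 : toset s1 :|: toset s2 = toset (s1 ++ s2).
Proof. by apply/setP => t; rewrite !inE mem_cat. Qed.

Lemma mem_l (j : 'I_3) s : (lshift 3 j \in toset s) = (val j \in s).
Proof. by rewrite inE. Qed.

Lemma mem_r (j : 'I_3) s : (rshift 3 j \in toset s) = ((3 + val j)%N \in s).
Proof. by rewrite inE. Qed.

Definition i6 := iota 0 6.

Definition disjn (s1 s2 : seq nat) : bool := all (fun t => ~~ ((t \in s1) && (t \in s2))) i6.

Lemma disj_t s1 s2 : [disjoint toset s1 & toset s2] = disjn s1 s2.
Proof.
apply/idP/idP.
- move/pred0P => H; apply/allP => t; rewrite mem_iota add0n => /andP [_ ht].
  by have := H (Ordinal ht); rewrite /= !inE => ->.
- move/allP => H; apply/pred0P => t /=; rewrite !inE; apply/negbTE/H.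
  by rewrite mem_iota add0n ltn_ord.
Qed.

Definition eqsn (s1 s2 : seq nat) : bool := all (fun t => (t \in s1) == (t \in s2)) i6.

Lemma eqset_t s1 s2 : (toset s1 == toset s2) = eqsn s1 s2.
Proof.
apply/eqP/allP => [H t|H].
- rewrite mem_iota add0n => /andP [_ ht].
  have := congr1 (fun A : {set 'I_6} => Ordinal ht \in A) H.
  by rewrite /= !inE => ->.
- apply/setP => t; rewrite !inE; apply/eqP/H.
  by rewrite mem_iota add0n ltn_ord.
Qed.

Definition cnt (s1 s2 : seq nat) : nat :=
  sumn [seq sumn [seq nat_of_bool ((a \in s1) && (b \in s2) && (b < a)%N) | b <- i6] | a <- i6].

Lemma sum6 (f : nat -> nat) : (\sum_(a < 6) f (val a) = sumn (map f i6))%N.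
Proof. by rewrite -(big_mkord xpredT f) sumnE big_map. Qed.

Lemma sign_t (R : realType) s1 s2 : shuffle_sign R (toset s1) (toset s2) = (-1) ^+ cnt s1 s2.
Proof.
rewrite /shuffle_sign; congr (_ ^+ _).
rewrite -sum1_card.
rewrite (eq_bigl (fun p : 'I_6 * 'I_6 => [&& val p.1 \in s1, val p.2 \in s2 & (val p.2 < val p.1)%N])); last first.
  by move=> p; rewrite !inE.
rewrite big_mkcond /= -(pair_bigA _ (fun (a b : 'I_6) =>
   if [&& val a \in s1, val b \in s2 & (val b < val a)%N] then 1%N else 0%N)) /=.
rewrite (eq_bigr (fun a : 'I_6 => sumn [seq nat_of_bool ((val a \in s1) && (b \in s2) && (b < val a)%N) | b <- i6])); last first.
  move=> a _; rewrite -(sum6 (fun b => nat_of_bool ((val a \in s1) && (b \in s2) && (b < val a)%N))).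
  by apply: eq_bigr => b _; rewrite andbA; case: (_ && _).
by rewrite (sum6 (fun a => sumn [seq nat_of_bool ((a \in s1) && (b \in s2) && (b < a)%N) | b <- i6])).
Qed.

Set Implicit Arguments. Unset Strict Implicit. Unset Printing Implicit Defensive.
Import Order.TTheory GRing.Theory Num.Theory.
Import numFieldNormedType.Exports.
Local Open Scope ring_scope.

Definition o0 : 'I_3 := @Ordinal 3 0 isT.
Definition o1 : 'I_3 := @Ordinal 3 1 isT.
Definition o2 : 'I_3 := @Ordinal 3 2 isT.
Definition ordl : seq 'I_3 := [:: o0; o1; o2].
Lemma mem_ordl (i : 'I_3) : i \in ordl.
Proof. by case: i => [[|[|[|n]]] H]. Qed.

Lemma sum_list (R : realType) (T : finType) (L : seq T) (F : T -> R[i]) :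
  uniq L -> (forall x, x \in L) -> \sum_(x : T) F x = \sum_(x <- L) F x.
Proof.
move=> uL mL; rewrite -big_enum /=; apply: perm_big.
by apply: uniq_perm; [exact: enum_uniq| exact: uL| move=> x; rewrite mem_enum mL].
Qed.

Definition L2 : seq ('I_3 * 'I_3) := [seq (a, b) | a <- ordl, b <- ordl].
Definition Leta := [seq (p, q) | p <- [seq (p, d) | p <- [seq (p, c) | p <- L2, c <- ordl], d <- ordl], q <- L2].
Definition L3 := [seq (p, q) | p <- L2, q <- [seq (p, q) | p <- L2, q <- L2]].

Lemma mem_L2 x : x \in L2.
Proof. case: x => a b; apply: allpairs_f; exact: mem_ordl. Qed.
Lemma mem_Leta x : x \in Leta.
Proof.
case: x => [[[p c] d] q]; apply: allpairs_f; last exact: mem_L2.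
apply: allpairs_f; last exact: mem_ordl.
apply: allpairs_f; last exact: mem_ordl.
exact: mem_L2.
Qed.
Lemma mem_L3 x : x \in L3.
Proof.
case: x => p [q r]; apply: allpairs_f; first exact: mem_L2.
apply: allpairs_f; exact: mem_L2.
Qed.
Lemma uniq_Leta : uniq Leta. Proof. by vm_compute. Qed.
Lemma uniq_L3 : uniq L3. Proof. by vm_compute. Qed.

Lemma list_top (R : realType) (T : eqType) (L : seq T) (S : T -> seq nat) (G : T -> R[i])
  (Q : pred T) K :
  all (fun p => Q p ==> eqsn (S p) i6) L -> (forall p, ~~ Q p -> G p = 0) ->
  \sum_(p <- L) (if K == toset (S p) then G p else 0) =
  if K == [set: 'I_6]%SET then \sum_(p <- seq.filter Q L) G p else 0.
Proof.
move=> /allP HS HF.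
rewrite (eq_big_seq (fun p => if Q p then (if K == [set: 'I_6]%SET then G p else 0) else 0)); last first.
  move=> p pL; case: (boolP (Q p)) => q.
    have := HS p pL; rewrite q /= -eqset_t => /eqP ->.
    suff -> : toset i6 = [set: 'I_6]%SET by [].
    by apply/setP => t; rewrite !inE /i6; case: t => [[|[|[|[|[|[|n]]]]]] H].
  by rewrite (HF p q); case: (_ == _).
rewrite -big_mkcond big_filter; case: (K == _); last by rewrite big1.
done.
Qed.

Lemma list_top' (R : realType) (T : eqType) (L : seq T) (S : T -> seq nat) (G : T -> R[i])
  (Q : pred T) K F :
  all (fun p => Q p ==> eqsn (S p) i6) L -> seq.filter Q L = F -> (forall p, ~~ Q p -> G p = 0) ->
  \sum_(p <- L) (if K == toset (S p) then G p else 0) =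
  if K == [set: 'I_6]%SET then \sum_(p <- F) G p else 0.
Proof. by move=> H1 <- H2; apply: list_top. Qed.

Definition Aeta (p : ('I_3 * 'I_3) * 'I_3 * 'I_3 * ('I_3 * 'I_3)) : seq nat :=
  [:: val p.1.2] ++ [:: (3 + val p.1.1.2)%N] ++ [:: val p.1.1.1.1; (3 + val p.1.1.1.2)%N].
Definition Beta (p : ('I_3 * 'I_3) * 'I_3 * 'I_3 * ('I_3 * 'I_3)) : seq nat :=
  [:: val p.2.1; (3 + val p.2.2)%N].
Definition Qeta (p : ('I_3 * 'I_3) * 'I_3 * 'I_3 * ('I_3 * 'I_3)) : bool :=
  [&& disjn (Aeta p) (Beta p),
      (3 + val p.1.1.2)%N \notin [:: val p.1.1.1.1; (3 + val p.1.1.1.2)%N] &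
      val p.1.2 \notin [:: (3 + val p.1.1.2)%N] ++ [:: val p.1.1.1.1; (3 + val p.1.1.1.2)%N]].

Lemma Qeta_top : all (fun p => Qeta p ==> eqsn (Aeta p ++ Beta p) i6) Leta.
Proof. by vm_compute. Qed.



Definition Jom := ('I_3 * 'I_3 * ('I_3 * 'I_3 * ('I_3 * 'I_3)))%type.
Definition A3 (p : Jom) : seq nat := [:: val p.1.1; (3 + val p.1.2)%N].
Definition B3 (p : Jom) : seq nat := [:: val p.2.1.1; (3 + val p.2.1.2)%N].
Definition C3 (p : Jom) : seq nat := [:: val p.2.2.1; (3 + val p.2.2.2)%N].
Definition Q3 (p : Jom) : bool := disjn (B3 p) (C3 p) && disjn (A3 p) (B3 p ++ C3 p).

Lemma Q3_top : all (fun p => Q3 p ==> eqsn (A3 p ++ (B3 p ++ C3 p)) i6) L3.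
Proof. by vm_compute. Qed.


Definition off (p : 'I_3 * 'I_3) : bool := ((val p.1 == 1) && (val p.2 == 2)) || ((val p.1 == 2) && (val p.2 == 1)).
Definition nzg (p : 'I_3 * 'I_3) : bool := (val p.1 == val p.2) || off p.
Definition Qeta' (p : (('I_3 * 'I_3) * 'I_3 * 'I_3 * ('I_3 * 'I_3))) := [&& Qeta p, val p.1.1.2 == 0, val p.1.2 == 0, off p.1.1.1 & nzg p.2].
Definition Q3' (p : Jom) := [&& Q3 p, nzg p.1, nzg p.2.1 & nzg p.2.2].

Lemma Qeta'_top : all (fun p => Qeta' p ==> eqsn (Aeta p ++ Beta p) i6) Leta.
Proof. by vm_compute. Qed.
Lemma Q3'_top : all (fun p => Q3' p ==> eqsn (A3 p ++ (B3 p ++ C3 p)) i6) L3.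
Proof. by vm_compute. Qed.

Definition Feta : seq (('I_3 * 'I_3) * 'I_3 * 'I_3 * ('I_3 * 'I_3)) := [:: (((( o1, o2), o0), o0), (o2, o1)); (((( o2, o1), o0), o0), (o1, o2))].
Lemma Feta_eq : seq.filter Qeta' Leta = Feta.
Proof. by vm_compute. Qed.
Definition F3 : seq Jom := [:: ((o0, o0), ((o1, o1), (o2, o2)));
  ((o0, o0), ((o1, o2), (o2, o1)));
  ((o0, o0), ((o2, o1), (o1, o2)));
  ((o0, o0), ((o2, o2), (o1, o1)));
  ((o1, o1), ((o0, o0), (o2, o2)));
  ((o1, o1), ((o2, o2), (o0, o0)));
  ((o1, o2), ((o0, o0), (o2, o1)));
  ((o1, o2), ((o2, o1), (o0, o0)));
  ((o2, o1), ((o0, o0), (o1, o2)));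
  ((o2, o1), ((o1, o2), (o0, o0)));
  ((o2, o2), ((o0, o0), (o1, o1)));
  ((o2, o2), ((o1, o1), (o0, o0)))].
Lemma F3_eq : seq.filter Q3' L3 = F3.
Proof. by vm_compute. Qed.
Lemma sumFeta (R : realType) (G : (('I_3 * 'I_3) * 'I_3 * 'I_3 * ('I_3 * 'I_3)) -> R[i]) :
  \sum_(p <- Feta) G p = G (((( o1, o2), o0), o0), (o2, o1)) + G (((( o2, o1), o0), o0), (o1, o2)).
Proof. by rewrite /Feta !big_cons big_nil addr0 ?addrA. Qed.
Lemma sumF3 (R : realType) (G : Jom -> R[i]) :
  \sum_(p <- F3) G p = G ((o0, o0), ((o1, o1), (o2, o2))) + G ((o0, o0), ((o1, o2), (o2, o1))) + G ((o0, o0), ((o2, o1), (o1, o2))) + G ((o0, o0), ((o2, o2), (o1, o1))) + G ((o1, o1), ((o0, o0), (o2, o2))) + G ((o1, o1), ((o2, o2), (o0, o0))) + G ((o1, o2), ((o0, o0), (o2, o1))) + G ((o1, o2), ((o2, o1), (o0, o0))) + G ((o2, o1), ((o0, o0), (o1, o2))) + G ((o2, o1), ((o1, o2), (o0, o0))) + G ((o2, o2), ((o0, o0), (o1, o1))) + G ((o2, o2), ((o1, o1), (o0, o0))).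
Proof. by rewrite /F3 !big_cons big_nil addr0 ?addrA. Qed.

Set Implicit Arguments. Unset Strict Implicit. Unset Printing Implicit Defensive.
Import Order.TTheory GRing.Theory Num.Theory.
Import numFieldNormedType.Exports.
Local Open Scope ring_scope.
Local Open Scope complex_scope.

Lemma iter_rtrig (R : realType) (s : seq 'I_6) (p q r : R) :
  exists p' q' r', iter_partial s (rtrig p q r) = rtrig p' q' r'.
Proof.
elim: s => [|k s [p' [q' [r' IH]]]]; first by exists p, q, r.
exists 0, (pr0 (ev R k) * wp R * r'), (- (pr0 (ev R k) * wp R * q')).
by apply/funext => y /=; rewrite IH D_rtrig.
Qed.

Lemma smooth_rtrig (R : realType) (p q r : R) : smoothR (rtrig p q r).
Proof.
move=> s x; have [p' [q' [r' ->]]] := iter_rtrig s p q r; exact: diff_rtrig.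
Qed.

Lemma smooth_ctrig (R : realType) (a b c : R[i]) : smoothC (ctrig a b c).
Proof.
split.
- rewrite (_ : (fun x => _) = rtrig (complex.Re a) (complex.Re b) (complex.Re c)).
    exact: smooth_rtrig.
  by apply/funext => y; rewrite ctrig_split.
- rewrite (_ : (fun x => _) = rtrig (complex.Im a) (complex.Im b) (complex.Im c)).
    exact: smooth_rtrig.
  by apply/funext => y; rewrite ctrig_split.
Qed.

Lemma pr0_shift (R : realType) (x : 'rV[R]_6) k :
  pr0 (x + ev R k) = pr0 x + ((val k == 0)%N)%:R.
Proof. by rewrite -pr0_ev /pr0 mxE. Qed.

Lemma Cx_per (R : realType) (x : 'rV[R]_6) k : Cx (x + ev R k) = Cx x.
Proof.
rewrite /Cx pr0_shift; case: (val k == 0%N) => /=; last by rewrite addr0.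
by rewrite mulrDr mulr1 /wp cosD2pi.
Qed.

Lemma Sx_per (R : realType) (x : 'rV[R]_6) k : Sx (x + ev R k) = Sx x.
Proof.
rewrite /Sx pr0_shift; case: (val k == 0%N) => /=; last by rewrite addr0.
by rewrite mulrDr mulr1 /wp sinD2pi.
Qed.

Lemma periodic_ctrig (R : realType) (a b c : R[i]) : Defs.periodic (ctrig a b c).
Proof. by move=> x k; rewrite /ctrig Cx_per Sx_per. Qed.

Lemma ReD (R : realType) (a b : R[i]) : complex.Re (a + b) = complex.Re a + complex.Re b. Proof. by case: a; case: b. Qed.
Lemma ImD (R : realType) (a b : R[i]) : complex.Im (a + b) = complex.Im a + complex.Im b. Proof. by case: a; case: b. Qed.
Lemma ReM (R : realType) (a b : R[i]) : complex.Re (a * b) = complex.Re a * complex.Re b - complex.Im a * complex.Im b.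
Proof. by case: a; case: b. Qed.
Lemma ImM (R : realType) (a b : R[i]) : complex.Im (a * b) = complex.Re a * complex.Im b + complex.Im a * complex.Re b.
Proof. by case: a => ? ?; case: b => ? ? /=; ring. Qed.
Lemma ReN (R : realType) (a : R[i]) : complex.Re (- a) = - complex.Re a. Proof. by case: a. Qed.
Lemma ImN (R : realType) (a : R[i]) : complex.Im (- a) = - complex.Im a. Proof. by case: a. Qed.
Lemma Re0 (R : realType) : complex.Re (0 : R[i]) = 0. Proof. by []. Qed.
Lemma Im0 (R : realType) : complex.Im (0 : R[i]) = 0. Proof. by []. Qed.
Lemma Re1 (R : realType) : complex.Re (1 : R[i]) = 1. Proof. by []. Qed.
Lemma Im1 (R : realType) : complex.Im (1 : R[i]) = 0. Proof. by []. Qed.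
Lemma ReC (R : realType) (r : R) : complex.Re (r%:C) = r. Proof. by []. Qed.
Lemma ImC (R : realType) (r : R) : complex.Im (r%:C) = 0. Proof. by []. Qed.
Lemma Rei (R : realType) : complex.Re ('i : R[i]) = 0. Proof. by []. Qed.
Lemma Imi (R : realType) : complex.Im ('i : R[i]) = 1. Proof. by []. Qed.
Lemma ReCx (R : realType) (p q : R) : complex.Re (Complex p q) = p. Proof. by []. Qed.
Lemma ImCx (R : realType) (p q : R) : complex.Im (Complex p q) = q. Proof. by []. Qed.
Lemma Ren (R : realType) n : complex.Re (n%:R : R[i]) = n%:R.
Proof. elim: n => // n IH; by rewrite !mulrS ReD IH. Qed.
Lemma Imn (R : realType) n : complex.Im (n%:R : R[i]) = 0.
Proof. elim: n => // n IH; by rewrite !mulrS ImD IH addr0. Qed.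



Lemma sum3 (R : realType) (F : 'I_3 -> R[i]) : \sum_(j < 3) F j = F o0 + F o1 + F o2.
Proof.
rewrite big_ord_recr /= big_ord_recr /= big_ord_recr /= big_ord0 add0r.
by congr (F _ + F _ + F _); apply: val_inj.
Qed.

Lemma gm_herm (R : realType) (j k : 'I_3) x : @gm R k j x = conjc (@gm R j k x).
Proof.
case: j => [[|[|[|?]]] Hj] //; case: k => [[|[|[|?]]] Hk] //;
rewrite /gm /ga /gb /gc /= !ctrig_split /=; congr Complex; rewrite /rtrig;
rewrite ?(ReD, ImD, ReM, ImM, ReN, ImN, Re0, Im0, Re1, Im1, ReC, ImC, Rei, Imi, ReCx, ImCx, Ren, Imn);
ring.
Qed.

Lemma gm_pos (R : realType) x (v : 'rV[R[i]]_3) (i0 : 'I_1) : v != 0 ->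
  0 < \sum_(j < 3) \sum_(k < 3) v i0 j * @gm R j k x * conjc (v i0 k).
Proof.
move=> vn0; rewrite (ord1 i0).
have H : (v ord0 o0 != 0) || (v ord0 o1 != 0) || (v ord0 o2 != 0).
  apply: contraNT vn0; rewrite !negb_or !negbK => /andP [/andP [/eqP h0 /eqP h1] /eqP h2].
  apply/eqP/matrixP => i j; rewrite (ord1 i) mxE.
  case: j => [[|[|[|?]]] Hj] //.
  - by rewrite -h0; congr (v _ _); apply: val_inj.
  - by rewrite -h1; congr (v _ _); apply: val_inj.
  - by rewrite -h2; congr (v _ _); apply: val_inj.
rewrite !sum3.
move: H; rewrite /gm /ga /gb /gc /ctrig /real_complex_def /=.
move: (v ord0 o0) (v ord0 o1) (v ord0 o2) => [p0 q0] [p1 q1] [p2 q2].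
rewrite !eq_complex /= => H.
have hpos : 0 < p0 ^+ 2 + q0 ^+ 2 + p1 ^+ 2 + q1 ^+ 2 + p2 ^+ 2 + q2 ^+ 2.
  move: H; rewrite -!negb_and => H.
  have : ~~ [&& p0 == 0, q0 == 0, p1 == 0, q1 == 0, p2 == 0 & q2 == 0].
    by move: H; do 6 case: eqP => //.
  case: (ltrP 0 (p0 ^+ 2 + q0 ^+ 2 + p1 ^+ 2 + q1 ^+ 2 + p2 ^+ 2 + q2 ^+ 2)) => // hle.
  have sq0 : forall t : R, t ^+ 2 = 0 -> t = 0 by move=> t /eqP; rewrite sqrf_eq0 => /eqP.
  have z : forall t : R, t ^+ 2 <= 0 -> t = 0.
    by move=> t ht; apply: sq0; apply/le_anti; rewrite ht sqr_ge0.
  have s0 := sqr_ge0 p0; have s1 := sqr_ge0 q0; have s2 := sqr_ge0 p1.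
  have s3 := sqr_ge0 q1; have s4 := sqr_ge0 p2; have s5 := sqr_ge0 q2.
  have h0 : p0 ^+ 2 <= 0 by lra.
  have h1 : q0 ^+ 2 <= 0 by lra.
  have h2 : p1 ^+ 2 <= 0 by lra.
  have h3 : q1 ^+ 2 <= 0 by lra.
  have h4 : p2 ^+ 2 <= 0 by lra.
  have h5 : q2 ^+ 2 <= 0 by lra.
  by rewrite (z p0 h0) (z q0 h1) (z p1 h2) (z q1 h3) (z p2 h4) (z q2 h5) !eqxx.
rewrite ltcE /=; apply/andP; split.
  by apply/eqP; ring.
have hc := cos2Dsin2 (wp R * pr0 x); rewrite -/(Cx x) -/(Sx x) in hc.
set C := Cx x in hc *; set S := Sx x in hc *.
rewrite (_ : _ + _ = 2 * (p0 ^+ 2 + q0 ^+ 2) + (p1 ^+ 2 + q1 ^+ 2) + (p2 ^+ 2 + q2 ^+ 2)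
   + (p1 + C * p2 + S * q2) ^+ 2 + (q1 + C * q2 - S * p2) ^+ 2
   + (1 - (C ^+ 2 + S ^+ 2)) * (p2 ^+ 2 + q2 ^+ 2)); last by ring.
rewrite hc subrr mul0r addr0.
have := sqr_ge0 (p1 + C * p2 + S * q2); have := sqr_ge0 (q1 + C * q2 - S * p2).
have := sqr_ge0 p0; have := sqr_ge0 q0.
lra.
Qed.

Set Implicit Arguments. Unset Strict Implicit. Unset Printing Implicit Defensive.
Import Order.TTheory GRing.Theory Num.Theory.
Import numFieldNormedType.Exports.
Local Open Scope ring_scope.
Local Open Scope complex_scope.



Lemma signE (R : realType) n : (-1) ^+ n = (if odd n then -1 else 1 : R[i]).
Proof. by rewrite -signr_odd; case: (odd n); rewrite ?expr1 ?expr0. Qed.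


Lemma C0 (R : realType) : (0 : R)%:C = 0 :> R[i]. Proof. by []. Qed.

Lemma gbc0 (R : realType) (p : 'I_3 * 'I_3) : ~~ off p -> gb p.1 p.2 = 0 :> R[i] /\ gc p.1 p.2 = 0 :> R[i].
Proof. by case: p => [[[|[|[|?]]] ?] [[|[|[|?]]] ?]]; rewrite /off /gb /gc //= => _; split. Qed.

Lemma g0 (R : realType) (p : 'I_3 * 'I_3) : ~~ nzg p ->
  [/\ ga p.1 p.2 = 0 :> R[i], gb p.1 p.2 = 0 :> R[i] & gc p.1 p.2 = 0 :> R[i]].
Proof. by case: p => [[[|[|[|?]]] ?] [[|[|[|?]]] ?]]; rewrite /nzg /off /ga /gb /gc //= => _; split. Qed.

Lemma dj0 (R : realType) (m : 'I_3) : (val m == 0)%N = false -> dj m = 0 :> R[i].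
Proof. by rewrite /dj => ->; rewrite mul0r. Qed.

Definition cc (R : realType) : R := wp R ^+ 2 / 144%:R.

Ltac zsimp := rewrite /ctrig ?(mul0r, mulr0, oppr0, if_same, addr0, add0r).

Lemma main_eq (R : realType) K x :
  scale_form (Complex 0 (1/2)) (wedge (del (delbar (omega_of (@gm R)))) (omega_of (@gm R))) K x
  = Complex (cc R) 0 * wedge (omega_of (@gm R)) (wedge (omega_of (@gm R)) (omega_of (@gm R))) K x.
Proof.
rewrite /scale_form omegaE delbar_mfc del_mfc /mfc !wedge_mf /mf.
under eq_bigr => p _ do [rewrite !sigE ?set1_l ?set1_r; do 3!rewrite ?setU1_l ?setU1_r ?setU_t; rewrite ?mem_l ?mem_r ?disj_t ?sign_t].
under [in RHS]eq_bigr => p _ do [rewrite !sigE ?set1_l ?set1_r; do 3!rewrite ?setU1_l ?setU1_r ?setU_t; rewrite ?mem_l ?mem_r ?disj_t ?sign_t].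
rewrite (@sum_list R _ Leta _ uniq_Leta mem_Leta).
rewrite (@sum_list R _ L3 _ uniq_L3 mem_L3).
rewrite (@list_top' R _ Leta _ _ Qeta' K Feta Qeta'_top Feta_eq); last first.
  move=> p; rewrite /Qeta'.
  case: (boolP (Qeta p)) => hq /=; last first.
    move: hq; rewrite /Qeta /Aeta /Beta.
    case: (disjn _ _); case: (_ \in [:: val p.1.1.1.1; _]); case: (val p.1.2 \in _) => //= _ _;
    by zsimp.
  case E1: (val p.1.1.2 == 0)%N; last by rewrite (dj0 _ E1) => _; zsimp.
  case E2: (val p.1.2 == 0)%N; last by rewrite (dj0 _ E2) => _; zsimp.
  case E3: (off p.1.1.1); last by have [-> ->] := gbc0 R (negbT E3) => _; zsimp.
  case E4: (nzg p.2) => // _.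
  by have [-> -> ->] := g0 R (negbT E4); zsimp.
rewrite (@list_top' R _ L3 _ _ Q3' K F3 Q3'_top F3_eq); last first.
  move=> p; rewrite /Q3'.
  case: (boolP (Q3 p)) => hq /=; last first.
    by move: hq; rewrite /Q3 /A3 /B3 /C3; case: (disjn _ _); case: (disjn _ _) => //= _ _; zsimp.
  case E1: (nzg p.1); last by have [-> -> ->] := g0 R (negbT E1) => _; zsimp.
  case E2: (nzg p.2.1); last by have [-> -> ->] := g0 R (negbT E2) => _; zsimp.
  case E3: (nzg p.2.2) => // _.
  by have [-> -> ->] := g0 R (negbT E3); zsimp.
rewrite sumFeta sumF3.
case: (K == _); last by rewrite !mulr0.
rewrite /cc /cnt /i6 /ga /gb /gc /dj /ctrig /real_complex_def.
(apply/eqP; rewrite eq_complex /=; apply/andP; split; apply/eqP).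
ring.

have hu := cos2Dsin2 (wp R * pr0 x); rewrite -/(Cx x) -/(Sx x) in hu.
transitivity (wp R ^+ 2 / 4%:R * (Cx x ^+ 2 + Sx x ^+ 2)); first by field.
transitivity (wp R ^+ 2 / 144%:R * (48%:R - 12%:R * (Cx x ^+ 2 + Sx x ^+ 2))); last by field.
by rewrite hu; field.
Qed.



Lemma cc_gt0 (R : realType) : 0 < cc R.
Proof.
rewrite /cc; apply: divr_gt0; last by rewrite ltr0n.
by apply: exprn_gt0; rewrite /wp pmulrn_lgt0 // pi_gt0.
Qed.
End Helpers.

Unset Implicit Arguments.
Set Strict Implicit.
Local Open Scope ring_scope.

Theorem proposition18 (R : realType) :
  exists g : 'I_3 -> 'I_3 -> cfun R,
    hermitian_metric g /\
    positive_top
      (scale_form (Complex 0 (1/2)) (wedge (del (delbar (omega_of g))) (omega_of g)))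
      (wedge (omega_of g) (wedge (omega_of g) (omega_of g))).
Proof.
exists (@Helpers.gm R); split.
- split.
  + move=> j k; split; [exact: Helpers.smooth_ctrig | exact: Helpers.periodic_ctrig].
  + move=> x; split; [move=> j k; exact: Helpers.gm_herm | move=> v vn0; exact: Helpers.gm_pos].
- move=> x; exists (Helpers.cc R); split; first exact: Helpers.cc_gt0.
  move=> K; exact: Helpers.main_eq.
Qed.
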